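(* Let $p$ be an odd prime and $\beta\in p\mathbb{Z}_p$, $\beta\neq 0$. Let $\mathbb{E}_\beta$ be an elliptic curve defined over $\mathbb{Q}_p$ (embedded in $\mathbb{P}^2$ by a Weierstrass embedding) together with a surjective $p$-adic analytic group homomorphism $\xi_\beta:\mathbb{Q}_p^\times\to\mathbb{E}_\beta(\mathbb{Q}_p)$ with kernel $\beta^{\mathbb{Z}}$ (these exist by Tate's theorem). Let $\chi_\beta:\mathbb{Z}_p\to\mathbb{E}_\beta(\mathbb{Q}_p)$ be $\chi_\beta(a)=\xi_\beta(\operatorname{Exp}(pa))$, let $\mathcal{Y}_\beta$ be the structure induced on $\mathbb{Z}_p$ by $(\mathbb{Q}_p,+,\times)$ and $\chi_\beta$, and let $\mathcal{E}_\beta$ be the structure induced on $\mathbb{Z}$ by $(\mathbb{Q}_p,+,\times)$ and $\chi_\beta|_{\mathbb{Z}}$. Then $\mathcal{Y}_\beta$ expands $(\mathbb{Z}_p,+,\operatorname{Val}_p)$ and $\mathcal{E}_\beta$ expands $(\mathbb{Z},+,\operatorname{Val}_p)$.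
   Context: $\operatorname{Exp}(a)=\sum_{n\ge0}a^n/n!$ is the $p$-adic exponential on $p\mathbb{Z}_p$. ''Definable'' means definable with parameters; subsets of $\mathbb{P}^2(\mathbb{Q}_p)^n$ are $(\mathbb{Q}_p,+,\times)$-definable in the usual way via standard affine charts. The structure induced on a set $A$ by $\mathcal{M}$ and a map $f$ has a relation for each $\{(a_1,\ldots,a_n)\in A^n:(f(a_1),\ldots,f(a_n))\in Y\}$ with $Y$ $\mathcal{M}$-definable. A structure on $\mathbb{Z}_p$ (resp. $\mathbb{Z}$) expands $(\mathbb{Z}_p,+,\operatorname{Val}_p)$ (resp. $(\mathbb{Z},+,\operatorname{Val}_p)$) if it defines the graph of $+$ and the relation $\{(a,b):\operatorname{Val}_p(a)\le\operatorname{Val}_p(b)\}$, where $\operatorname{Val}_p$ is the $p$-adic valuation. *)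

(* Defs.v *)
From HB Require Import structures.
From mathcomp Require Import all_boot all_order all_algebra.
Set Implicit Arguments. Unset Strict Implicit. Unset Printing Implicit Defensive.
Import Order.TTheory GRing.Theory Num.Theory.
Local Open Scope ring_scope.

Section Padic.
Variables (K : fieldType) (v : K -> int).

(* x lies in p^N Z_p  (0 has valuation +oo) *)
Definition ball (N : int) (x : K) : Prop := x = 0 \/ (N <= v x).

Definition is_lim (u : nat -> K) (l : K) : Prop :=
  forall N : int, exists m : nat, forall n : nat, (m <= n)%N -> ball N (u n - l).

Definition cauchy (u : nat -> K) : Prop :=
  forall N : int, exists m : nat, forall n k : nat, (m <= n)%N -> (m <= k)%N ->
    ball N (u n - u k).

(* (K, v) is (isomorphic as a valued field to) Q_p with v = Val_p on K^x:
   v is a discrete valuation, v(p) = 1, K is complete and Q is dense. *)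
Definition padic_field (p : nat) : Prop :=
  [/\ forall x y : K, x != 0 -> y != 0 -> v (x * y) = v x + v y,
      forall x y : K, x != 0 -> y != 0 -> x + y != 0 ->
        v x <= v (x + y) \/ v y <= v (x + y),
      (p%:R : K) != 0 /\ v p%:R = 1,
      forall u, cauchy u -> exists l, is_lim u l
    & forall (x : K) (N : int), exists q : rat, ball N (x - ratr q)].

Definition isZp (x : K) : Prop := ball 0 x.

Definition val_le (a b : K) : Prop := b = 0 \/ (a != 0 /\ v a <= v b).

Definition Exp_is (a e : K) : Prop :=
  is_lim (fun N => \sum_(n < N) a ^+ n / (n`!)%:R) e.

End Padic.

Section Curves.
Variable K : fieldType.

Notation pt := (K * K * K)%type.

(* the canonical representative of a point of P^2(K):
   (x:y:1), (x:1:0) or (1:0:0) *)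
Definition normalized (t : pt) : bool :=
  let: (x, y, z) := t in
  [|| z == 1, (z == 0) && (y == 1) | [&& z == 0, y == 0 & x == 1]].

Definition coord (t : pt) (i : 'I_3) : K :=
  let: (x, y, z) := t in
  if val i == 0%N then x else if val i == 1%N then y else z.

Record weier := Weier { wa1 : K; wa2 : K; wa3 : K; wa4 : K; wa6 : K }.

Definition disc (W : weier) : K :=
  let: Weier a1 a2 a3 a4 a6 := W in
  let b2 := a1 ^+ 2 + 4 * a2 in
  let b4 := 2 * a4 + a1 * a3 in
  let b6 := a3 ^+ 2 + 4 * a6 in
  let b8 := a1 ^+ 2 * a6 + 4 * a2 * a6 - a1 * a3 * a4 + a2 * a3 ^+ 2 - a4 ^+ 2 in
  - b2 ^+ 2 * b8 - 8 * b4 ^+ 3 - 27 * b6 ^+ 2 + 9 * b2 * b4 * b6.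

Definition on_curve (W : weier) (t : pt) : bool :=
  let: Weier a1 a2 a3 a4 a6 := W in
  let: (x, y, z) := t in
  y ^+ 2 * z + a1 * x * y * z + a3 * y * z ^+ 2
    == x ^+ 3 + a2 * x ^+ 2 * z + a4 * x * z ^+ 2 + a6 * z ^+ 3.

(* E(K), each point given by its normalized representative *)
Definition Epoint (W : weier) (t : pt) : bool := normalized t && on_curve W t.

Definition Ozero : pt := (0, 1, 0).

(* chord-tangent addition (Silverman, AEC, III.2.3) on normalized points of E *)
Definition eadd (W : weier) (P Q : pt) : pt :=
  let: Weier a1 a2 a3 a4 a6 := W in
  let: (x1, y1, z1) := P in
  let: (x2, y2, z2) := Q in
  if z1 == 0 then Q else if z2 == 0 then P else
  if (x1 == x2) && (y1 + y2 + a1 * x2 + a3 == 0) then Ozero else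
  let lam := if x1 != x2 then (y2 - y1) / (x2 - x1)
             else (3 * x1 ^+ 2 + 2 * a2 * x1 + a4 - a1 * y1) / (2 * y1 + a1 * x1 + a3) in
  let nu := if x1 != x2 then (y1 * x2 - y2 * x1) / (x2 - x1)
            else (- x1 ^+ 3 + a4 * x1 + 2 * a6 - a3 * y1) / (2 * y1 + a1 * x1 + a3) in
  let x3 := lam ^+ 2 + a1 * lam - a2 - x1 - x2 in
  (x3, - (lam + a1) * x3 - nu - a3, 1).

End Curves.

(* near every x0 != 0, in some standard affine chart {t_i != 0}, the two affine
   coordinates t_j / t_i of xi x are convergent power series in (x - x0). *)
Definition analytic_map (K : fieldType) (v : K -> int) (xi : K -> (K * K * K)%type) : Prop :=
  forall x0 : K, x0 != 0 -> exists (N : int) (i : 'I_3) (c : 'I_3 -> nat -> K),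
    forall x : K, x != 0 -> ball v N (x - x0) ->
      coord (xi x) i != 0 /\
      forall j : 'I_3, j != i ->
        is_lim v (fun M => \sum_(n < M) c j n * (x - x0) ^+ n)
                 (coord (xi x) j / coord (xi x) i).

(* subsets of K^m definable in (K,+,x) with parameters *)
Definition K_definable (K : fieldType) (m : nat) (X : seq K -> Prop) : Prop :=
  exists f : GRing.formula K,
    forall s : seq K, size s = m -> (X s <-> GRing.holds s f).

Definition flat3 (K : fieldType) (s : seq (K * K * K)) : seq K :=
  flatten [seq [:: t.1.1; t.1.2; t.2] | t <- s].

(* subsets of P^2(K)^n (given on normalized representatives) definable in
   (K,+,x): the set of coordinate vectors of the normalized representatives
   is definable in K^(3n). *)
Definition P2_definable (K : fieldType) (n : nat) (Y : seq (K * K * K) -> Prop) : Prop :=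
  K_definable (3 * n) (fun s => exists ts : seq (K * K * K),
    [/\ size ts = n, all (@normalized K) ts, s = flat3 ts & Y ts]).

(* first-order formulas over a relational language whose symbols are
   (names of) relations on T; variables are natural numbers *)
Inductive fo (T : Type) : Type :=
| FoRel of (seq T -> Prop) & seq nat
| FoEq of nat & nat
| FoNot of fo T
| FoAnd of fo T & fo T
| FoEx of nat & fo T.

Fixpoint fo_sat (T : Type) (e : nat -> T) (f : fo T) : Prop :=
  match f with
  | FoRel R vs => R (map e vs)
  | FoEq i j => e i = e j
  | FoNot g => ~ fo_sat e g
  | FoAnd g h => fo_sat e g /\ fo_sat e h
  | FoEx i g => exists x : T, fo_sat (fun j => if j == i then x else e j) g
  end.

Fixpoint fo_in (T : Type) (L : (seq T -> Prop) -> Prop) (f : fo T) : Prop :=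
  match f with
  | FoRel R _ => L R
  | FoEq _ _ => True
  | FoNot g => fo_in L g
  | FoAnd g h => fo_in L g /\ fo_in L h
  | FoEx _ g => fo_in L g
  end.

(* X ⊆ T^m is definable (with parameters) in the structure (T, L):
   variables 0..m-1 are the free variables, others are parameters e0 *)
Definition fo_definable (T : Type) (L : (seq T -> Prop) -> Prop) (m : nat)
    (X : seq T -> Prop) : Prop :=
  exists f : fo T, fo_in L f /\ exists e0 : nat -> T,
    forall s : seq T, size s = m -> (X s <-> fo_sat (fun i => nth (e0 i) s i) f).

(* language of the structure induced on A by (K,+,x) and g : A -> P^2(K) *)
Definition induced_lang (K : fieldType) (A : Type) (g : A -> (K * K * K)%type)
    : (seq A -> Prop) -> Prop :=
  fun R => exists (n : nat) (Y : seq (K * K * K) -> Prop),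
    P2_definable n Y /\ forall s : seq A, R s <-> (size s = n /\ Y (map g s)).

(* the structure (A, L) expands (A, +, Val): it defines the graph addg of + and
   the relation Val(a) <= Val(b) *)
Definition expands_add_val (A : Type) (L : (seq A -> Prop) -> Prop)
    (addg : A -> A -> A -> Prop) (vle : A -> A -> Prop) : Prop :=
  fo_definable L 3 (fun s => match s with [:: a; b; c] => addg a b c | _ => False end)
  /\ fo_definable L 2 (fun s => match s with [:: a; b] => vle a b | _ => False end).

Definition Zp_type (K : fieldType) (v : K -> int) := {x : K | isZp v x}.


Definition int_val_le (p : nat) (a b : int) : Prop :=
  b = 0 \/ (a != 0 /\ (logn p (absz a) <= logn p (absz b))%N).

(* Main.v *)
Require Import Defs.
From HB Require Import structures.
From mathcomp Require Import all_boot all_order all_algebra.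
From mathcomp Require Import zify ring.
From Stdlib Require Import Classical Setoid.
Import Order.TTheory GRing.Theory Num.Theory.
Set Implicit Arguments. Unset Strict Implicit. Unset Printing Implicit Defensive.

Section FO.
Local Open Scope ring_scope.
Variables (K : fieldType) (T : Type) (t0 : T) (g : T -> (K * K * K)%type) (iota : T -> K).
Variables (Yadd Yv : seq (K * K * K) -> Prop) (N : nat) (vle : T -> T -> Prop).
Hypothesis hYadd : P2_definable 3 Yadd.
Hypothesis hYv : P2_definable 2 Yv.
Hypothesis addsem : forall a b c, Yadd [:: g a; g b; g c] <-> iota a + iota b = iota c.
Hypothesis mulex : forall a (n : nat), exists b, iota b = n%:R * iota a.
Hypothesis vsem : forall a b c d, iota c = N%:R * iota a -> iota d = N%:R * iota b ->
  (Yv [:: g c; g d] <-> vle a b).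

Definition Radd : seq T -> Prop := fun s => size s = 3 /\ Yadd (map g s).
Definition Rv : seq T -> Prop := fun s => size s = 2 /\ Yv (map g s).

Lemma LRadd : induced_lang g Radd.
Proof. by exists 3%N, Yadd; split. Qed.

Lemma LRv : induced_lang g Rv.
Proof. by exists 2%N, Yv; split. Qed.

Lemma Radd_sem a b c : Radd [:: a; b; c] <-> iota a + iota b = iota c.
Proof. rewrite /Radd /=; split => [[_ /addsem //]|h]; split => //; exact/addsem. Qed.

Fixpoint mulF (base n i j : nat) : fo T :=
  match n with
  | 0 => FoRel Radd [:: j; j; j]
  | n'.+1 => FoEx (base + n') (FoAnd (mulF base n' i (base + n'))
                                      (FoRel Radd [:: base + n'; i; j]))
  end.

Lemma mulF_in base n i j : fo_in (induced_lang g) (mulF base n i j).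
Proof. by elim: n j => [|n IH] j /=; [exact: LRadd | split; [exact: IH | exact: LRadd]]. Qed.

Lemma mulF_sem base n : forall i j (e : nat -> T), (i < base)%N ->
  ~~ ((base <= j) && (j < base + n))%N ->
  (fo_sat e (mulF base n i j) <-> iota (e j) = n%:R * iota (e i)).
Proof.
elim: n => [|n IH] i j e hi hj.
  rewrite /= Radd_sem mul0r; split => h.
    by rewrite -(addrK (iota (e j)) (iota (e j))) h subrr.
  by rewrite h addr0.
rewrite /=.
have ik : (i == base + n)%N = false by apply/negbTE; rewrite neq_ltn (leq_trans hi) ?leq_addr.
have jk : (j == base + n)%N = false.
  apply/negbTE; apply: contra hj => /eqP ->; rewrite leq_addr /=; lia.
have hk : ~~ ((base <= base + n) && (base + n < base + n))%N by rewrite ltnn andbF.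
have key : forall x, fo_sat (fun j0 => if j0 == (base + n)%N then x else e j0)
    (FoAnd (mulF base n i (base + n)) (FoRel Radd [:: base + n; i; j])) <->
    (iota x = n%:R * iota (e i) /\ iota x + iota (e i) = iota (e j)).
  move=> x; have hIH := IH i (base + n)%N (fun j0 => if j0 == (base + n)%N then x else e j0) hi hk.
  rewrite /= eqxx ik jk in hIH *; rewrite Radd_sem.
  by rewrite hIH.
split.
  move=> [x /key [h1 h2]]; rewrite -h2 h1.
  by rewrite mulrSr mulrDl mul1r.
move=> h; have [x hx] := mulex (e i) n.
exists x; apply/key; split => //.
by rewrite hx h mulrSr mulrDl mul1r.
Qed.

Lemma fo_expands : expands_add_val (induced_lang g)
  (fun a b c => iota a + iota b = iota c) vle.
Proof.
split.
  exists (FoRel Radd [:: 0; 1; 2]%N); split; first exact: LRadd.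
  exists (fun _ => t0) => s.
  case: s => [|a [|b [|c [|? ?]]]] hs; try by rewrite /= in hs.
  by rewrite /= Radd_sem.
exists (FoEx 2 (FoEx 3 (FoAnd (mulF 4 N 0 2) (FoAnd (mulF 4 N 1 3) (FoRel Rv [:: 2; 3]%N))))).
split; first by split; [exact: mulF_in | split; [exact: mulF_in | exact: LRv]].
exists (fun _ => t0) => s.
case: s => [|a [|b [|? ?]]] hs; try by rewrite /= in hs.
set e := fun i => _.
split.
  move=> hab.
  have [c hc] := mulex a N; have [d hd] := mulex b N.
  exists c, d.
  set e2 := fun j => _.
  split; first by apply/(mulF_sem (base:=4) (n:=N) (i:=0) (j:=2) e2).
  split; first by apply/(mulF_sem (base:=4) (n:=N) (i:=1) (j:=3) e2).
  by split => //; apply/(vsem hc hd).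
move=> [c [d]].
set e2 := fun j => _.
move=> [/(mulF_sem (base:=4) (n:=N) (i:=0) (j:=2) e2) hc
         [/(mulF_sem (base:=4) (n:=N) (i:=1) (j:=3) e2) hd [_ hY]]].
move: hc hd hY; rewrite /e2 /e /= => hc hd hY.

exact/(vsem (hc isT isT) (hd isT isT)).
Qed.

End FO.

Lemma logn_fact_rec p n : prime p ->
  logn p n`! = (n %/ p + logn p (n %/ p)`!)%N.
Proof.
move=> pr; have p0 : (0 < p)%N by exact: prime_gt0.
elim: n => [|n IH]; first by rewrite div0n fact0 logn1.
rewrite factS lognM ?fact_gt0 // IH divnS //.
case: (boolP (p %| n.+1)%N) => hd /=; last first.
  by rewrite logn_coprime ?prime_coprime.
have hl : logn p n.+1 = (logn p (n %/ p).+1).+1.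
  rewrite -{1}(divnK hd) lognM ?(logn_prime p pr) ?eqxx ?addn1 ?(divnS n p0) ?hd //.
rewrite hl add1n factS lognM ?fact_gt0 //.
lia.
Qed.

Lemma logn_fact_bound p n : prime p -> odd p -> (2 * logn p n`! <= n.-1)%N.
Proof.
move=> pr od; have p3 : (3 <= p)%N.
  have := prime_gt1 pr; case: p pr od => [|[|[|p]]] //.
elim: n {-2}n (leqnn n) => [|N IH] n hn.
  by move: hn; rewrite leqn0 => /eqP ->; rewrite fact0 logn1.
rewrite logn_fact_rec //.
set q := n %/ p.
have hq : (q * p <= n)%N by rewrite leq_trunc_div.
case: (posnP q) => [->|q0]; first by rewrite fact0 logn1.
have h3 : (q * 3 <= q * p)%N by rewrite leq_mul2l p3 orbT.
clearbody q; have : (q <= N)%N. { clear -hn hq q0 h3; lia. } move=> qN; have IHq := IH q qN.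
lia.
Qed.

Local Open Scope ring_scope.

Section Val.
Variables (K : fieldType) (v : K -> int) (p : nat).
Hypothesis vM : forall x y : K, x != 0 -> y != 0 -> v (x * y) = v x + v y.
Hypothesis vU : forall x y : K, x != 0 -> y != 0 -> x + y != 0 ->
  v x <= v (x + y) \/ v y <= v (x + y).
Hypothesis p0 : (p%:R : K) != 0.
Hypothesis vp : v p%:R = 1.
Hypothesis pr : prime p.
Hypothesis podd : odd p.

Local Notation bl := (ball v).

Lemma v1 : v 1 = 0.
Proof.
have h : v 1 = v 1 + v 1 by rewrite -{1}(mulr1 (1 : K)) vM ?oner_neq0.
lia.
Qed.

Lemma vN1 : v (-1) = 0.
Proof.
have h : (-1 : K) != 0 by rewrite oppr_eq0 oner_eq0.
have e : v (-1) + v (-1) = 0 by rewrite -vM // mulrNN mulr1 v1.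
lia.
Qed.

Lemma vN x : v (- x) = v x.
Proof.
case: (eqVneq x 0) => [->|x0]; first by rewrite oppr0.
have h : (-1 : K) != 0 by rewrite oppr_eq0 oner_eq0.
by rewrite -mulN1r vM // vN1 add0r.
Qed.

Lemma vV x : x != 0 -> v x^-1 = - v x.
Proof.
move=> x0; have := vM x0 (invr_neq0 x0); rewrite mulfV // v1; lia.
Qed.

Lemma vX x n : x != 0 -> v (x ^+ n) = v x *+ n.
Proof.
move=> x0; elim: n => [|n IH]; first by rewrite expr0 v1 mulr0n.
by rewrite exprS vM ?expf_neq0 // IH mulrS.
Qed.

Lemma ball0 N : bl N 0. Proof. by left. Qed.

Lemma ballD N x y : bl N x -> bl N y -> bl N (x + y).
Proof.
rewrite /ball.
case=> [->|hx]; first by rewrite add0r.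
case=> [->|hy]; first by rewrite addr0; right.
case: (eqVneq x 0) => [->|x0]; first by rewrite add0r; right.
case: (eqVneq y 0) => [->|y0]; first by rewrite addr0; right.
case: (eqVneq (x + y) 0) => [->|s0]; first by left.
right; case: (vU x0 y0 s0) => h; lia.
Qed.

Lemma ballN N x : bl N x -> bl N (- x).
Proof.
rewrite /ball. case=> [->|h]; [by rewrite oppr0; left | by right; rewrite vN]. Qed.

Lemma ballB N x y : bl N x -> bl N y -> bl N (x - y).
Proof. by move=> hx hy; apply: ballD => //; apply: ballN. Qed.

Lemma ballM N M x y : bl N x -> bl M y -> bl (N + M) (x * y).
Proof.
rewrite /ball.
case=> [->|hx]; first by rewrite mul0r; left.
case=> [->|hy]; first by rewrite mulr0; left.
case: (eqVneq x 0) => [->|x0]; first by rewrite mul0r; left.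
case: (eqVneq y 0) => [->|y0]; first by rewrite mulr0; left.
right; rewrite vM //; lia.
Qed.

Lemma ball_le N M x : N <= M -> bl M x -> bl N x.
Proof.
rewrite /ball. move=> h [->|hx]; [by left | right; lia]. Qed.

Lemma ball_sum N (I : Type) (r : seq I) (P : pred I) (F : I -> K) :
  (forall i, P i -> bl N (F i)) -> bl N (\sum_(i <- r | P i) F i).
Proof.
move=> h; apply: (big_rec (fun x => bl N x)); first exact: ball0.
by move=> i x Pi hx; apply: ballD => //; apply: h.
Qed.

Lemma ball_v x : bl (v x) x. Proof. by right. Qed.

Lemma ball_all x : (forall N, bl N x) -> x = 0.
Proof.
rewrite /ball. by move=> h; case: (h (v x + 1)) => // hx; lia. Qed.

Lemma ball_strict x y : x != 0 -> bl (v x + 1) (y - x) -> y != 0 /\ v y = v x.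
Proof.
move=> x0 h.
case: (eqVneq (y - x) 0) => [/eqP|d0].
  by rewrite subr_eq0 => /eqP ->.
have hd : v x + 1 <= v (y - x) by case: h => // /eqP; rewrite (negPf d0).
have y0 : y != 0.
  apply/eqP => y0; move: hd; rewrite y0 sub0r vN; lia.
split => //.
have e1 : x + (y - x) = y by rewrite addrC subrK.
have h1 := vU x0 d0; rewrite e1 in h1; have {}h1 := h1 y0.
have md0 : - (y - x) != 0 by rewrite oppr_eq0.
have e2 : y + - (y - x) = x by rewrite opprB addrC subrK.
have h2 := vU y0 md0; rewrite e2 vN in h2; have {}h2 := h2 x0.
lia.
Qed.

Lemma ball_exp N x n : bl N x -> bl (N *+ n) (x ^+ n).
Proof.
move=> h; elim: n => [|n IH]; first by rewrite expr0 mulr0n; right; rewrite v1.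
by rewrite exprSr mulrSr; apply: ballM.
Qed.

Lemma lim_unique u a b : is_lim v u a -> is_lim v u b -> a = b.
Proof.
move=> ha hb; apply/eqP; rewrite -subr_eq0; apply/eqP; apply: ball_all => N.
have [m1 h1] := ha N; have [m2 h2] := hb N.
have := ballB (h2 (maxn m1 m2) (leq_maxr _ _)) (h1 (maxn m1 m2) (leq_maxl _ _)).
by have -> : u (maxn m1 m2) - b - (u (maxn m1 m2) - a) = a - b by ring.
Qed.

Lemma lim_ball u l N : is_lim v u l ->
  (exists m, forall n, (m <= n)%N -> bl N (u n)) -> bl N l.
Proof.
move=> hl [m hm]; have [m1 h1] := hl N.
have := ballB (hm (maxn m m1) (leq_maxl _ _)) (h1 (maxn m m1) (leq_maxr _ _)).
by have -> : u (maxn m m1) - (u (maxn m m1) - l) = l by ring.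
Qed.

Lemma lim_ext u w a : is_lim v u a ->
  (forall N, exists m, forall n, (m <= n)%N -> bl N (u n - w n)) -> is_lim v w a.
Proof.
move=> hu hd N; have [m1 h1] := hu N; have [m2 h2] := hd N.
exists (maxn m1 m2) => n hn.
have := ballB (h1 n (leq_trans (leq_maxl _ _) hn)) (h2 n (leq_trans (leq_maxr _ _) hn)).
by have -> : u n - a - (u n - w n) = w n - a by ring.
Qed.

Lemma limB u w a b : is_lim v u a -> is_lim v w b ->
  is_lim v (fun n => u n - w n) (a - b).
Proof.
move=> hu hw N; have [m1 h1] := hu N; have [m2 h2] := hw N.
exists (maxn m1 m2) => n hn.
have := ballB (h1 n (leq_trans (leq_maxl _ _) hn)) (h2 n (leq_trans (leq_maxr _ _) hn)).
by have -> : u n - a - (w n - b) = u n - w n - (a - b) by ring.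
Qed.

Lemma limC u a c : is_lim v u a -> is_lim v (fun n => u n - c) (a - c).
Proof.
move=> hu N; have [m h] := hu N; exists m => n hn.
have -> : u n - c - (a - c) = u n - a by ring.
exact: h.
Qed.

Lemma lim_cst c : is_lim v (fun _ => c) c.
Proof. by move=> N; exists 0%N => n _; rewrite subrr; left. Qed.

Lemma lim_step u l N : is_lim v u l -> exists m, forall n, (m <= n)%N -> bl N (u n.+1 - u n).
Proof.
move=> h; have [m hm] := h N; exists m => n hn.
have := ballB (hm n.+1 (leqW hn)) (hm n hn).
by have -> : u n.+1 - l - (u n - l) = u n.+1 - u n by ring.
Qed.

Lemma ball0_nat n : bl 0 (n%:R : K).
Proof.
elim: n => [|n IH]; first by left.
by rewrite -addn1 natrD; apply: ballD => //; right; rewrite v1.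
Qed.

Lemma coprime_nat m : coprime p m -> ~ bl 1 (m%:R : K).
Proof.
move=> cpm hm.
have [a _ ha] := Bezoutl m (prime_gt0 pr).
move: cpm; rewrite /coprime => /eqP g1; rewrite g1 in ha.
have e : (1 + a * m = (1 + a * m) %/ p * p)%N by rewrite divnK.
have eK : (1 : K) = ((1 + a * m) %/ p)%:R * p%:R - a%:R * m%:R.
  by rewrite -!natrM -e natrD addrK.
have : bl 1 (1 : K).
  rewrite eK; apply: ballB.
    by have := ballM (ball0_nat ((1 + a * m) %/ p)) (ball_v (p%:R : K)); rewrite vp add0r.
  by have := ballM (ball0_nat a) hm; rewrite add0r.
case=> [/eqP|]; [by rewrite oner_eq0 | rewrite v1; lia].
Qed.

Lemma vnat n : (0 < n)%N -> (n%:R : K) != 0 /\ v n%:R = (logn p n)%:Z.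
Proof.
move=> n0; have [m cpm e] := pfactor_coprime pr n0.
have hm := coprime_nat cpm.
have m0 : (m%:R : K) != 0 by apply/eqP => h; apply: hm; rewrite h; left.
have vm : v m%:R = 0.
  case: (ball0_nat m) => [/eqP|h]; first by rewrite (negPf m0).
  suff : ~ (1 <= v m%:R) by lia.
  by move=> h1; apply: hm; right.
have pe0 : (p%:R : K) ^+ logn p n != 0 by rewrite expf_neq0.
have -> : (n%:R : K) = m%:R * (p%:R)^+(logn p n) by rewrite {1}e natrM natrX.
split; first by rewrite mulf_neq0.
rewrite vM // vm vX // vp add0r; lia.
Qed.

Lemma natr_neq0 n : (0 < n)%N -> (n%:R : K) != 0.
Proof. by case/vnat. Qed.

Definition wf n := logn p n`!.

Lemma fact_neq0 n : (n`!%:R : K) != 0.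
Proof. exact: natr_neq0 (fact_gt0 n). Qed.

Lemma vfact n : v (n`!%:R : K) = (wf n)%:Z.
Proof. exact: (vnat (fact_gt0 n)).2. Qed.

Lemma wf_bound n : (2 * wf n <= n.-1)%N.
Proof. exact: logn_fact_bound. Qed.


Definition F (x : K) n := x ^+ n / (n`!)%:R.
Definition S x N := \sum_(n < N) F x n.

Lemma ball_exp' N x n : bl N x -> bl (N * n%:Z) (x ^+ n).
Proof.
move=> h; have := ball_exp n h.
by have -> : N *+ n = N * n%:Z by lia.
Qed.

Lemma ball_inv_fact n : bl (- (wf n)%:Z) ((n`!)%:R : K)^-1.
Proof. by right; rewrite vV ?fact_neq0 // vfact. Qed.

Lemma ballF x n : bl 1 x -> bl (n%:Z - (wf n)%:Z) (F x n).
Proof.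
move=> hx; have := ballM (ball_exp' n hx) (ball_inv_fact n).
by rewrite mul1r.
Qed.

Lemma wf2 n : (n <= 2 * (n - wf n))%N.
Proof. have := wf_bound n; lia. Qed.

Lemma ballF0 x n : bl 1 x -> bl 0 (F x n).
Proof. move=> hx; apply: ball_le (ballF n hx); have := wf_bound n; lia. Qed.

Lemma ballS0 x N : bl 1 x -> bl 0 (S x N).
Proof. by move=> hx; apply: ball_sum => i _; apply: ballF0. Qed.

Lemma S_rec x N : S x N.+1 = S x N + F x N.
Proof. by rewrite /S big_ord_recr. Qed.

Lemma F0 x : F x 0 = 1.
Proof. by rewrite /F expr0 fact0 divr1. Qed.

Lemma F1 x : F x 1 = x.
Proof. by rewrite /F expr1 divr1. Qed.

Lemma Exp_ball0 x e : bl 1 x -> Exp_is v x e -> bl 0 e.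
Proof. by move=> hx he; apply: (lim_ball he); exists 0%N => n _; apply: ballS0. Qed.

Lemma Fdiff x y n : bl 1 x -> bl 1 y -> (2 <= n)%N ->
  bl (v (x - y) + 1) (F x n - F y n).
Proof.
move=> hx hy n2.
have -> : F x n - F y n = (x - y) * ((\sum_(i < n) x ^+ (n.-1 - i) * y ^+ i) * (n`!%:R)^-1).
  by rewrite /F -mulrBl subrXX mulrA.
have hs : bl (n.-1)%:Z (\sum_(i < n) x ^+ (n.-1 - i) * y ^+ i).
  apply: ball_sum => i _.
  apply: ball_le (ballM (ball_exp' (n.-1 - i) hx) (ball_exp' i hy)).
  have := ltn_ord i; lia.
have := ballM (ball_v (x - y)) (ballM hs (ball_inv_fact n)).
apply: ball_le; have := wf_bound n; lia.
Qed.

Lemma S2 x : S x 2 = 1 + x.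
Proof. by rewrite /S !big_ord_recr big_ord0 /= add0r F0 F1. Qed.

Lemma Exp_diff x y ex ey : bl 1 x -> bl 1 y -> x != y ->
  Exp_is v x ex -> Exp_is v y ey -> bl (v (x - y) + 1) (ex - ey - (x - y)).
Proof.
move=> hx hy xy hex hey.
have {}hex : is_lim v (S x) ex := hex; have {}hey : is_lim v (S y) ey := hey.
have hl := limC (x - y) (limB hex hey).
apply: (lim_ball hl); exists 2%N => n.
elim: n => [//|n IH]; rewrite leq_eqVlt => /orP [/eqP <-|hn].
  rewrite S2 S2 (_ : 1 + x - (1 + y) - (x - y) = 0); [by left | by ring].
rewrite !S_rec.
have -> : S x n + F x n - (S y n + F y n) - (x - y) =
  (S x n - S y n - (x - y)) + (F x n - F y n) by ring.
by apply: ballD; [apply: IH | apply: Fdiff].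
Qed.

Lemma S0 N : (0 < N)%N -> S 0 N = 1.
Proof.
case: N => // N _; elim: N => [|N IH]; first by rewrite S_rec /S big_ord0 add0r F0.
by rewrite S_rec IH /F expr0n /= mul0r addr0.
Qed.

Lemma Exp0 e : Exp_is v 0 e -> e = 1.
Proof.
move=> he; apply: (lim_unique he); apply: (lim_ext (lim_cst 1)) => N.
by exists 1%N => n hn; rewrite -/(S 0 n) S0 // subrr; left.
Qed.

Lemma Fsum x y n : F (x + y) n = \sum_(i < n.+1) F x i * F y (n - i).
Proof.
rewrite /F addrC exprDn mulr_suml; apply: eq_bigr => i _.
have hi : (i <= n)%N by rewrite -ltnS.
have e : (n`!%:R : K) = 'C(n, i)%:R * (i`!)%:R * ((n - i)`!)%:R.
  by rewrite -!natrM -mulnA bin_fact.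
have c0 : ('C(n, i)%:R : K) != 0 by apply: natr_neq0; rewrite bin_gt0.
have f1 := fact_neq0 i; have f2 := fact_neq0 (n - i).
rewrite e -mulr_natr; field.
by rewrite f1 f2 c0.
Qed.

Lemma S_split x y N : S (x + y) N = \sum_(a < N) F x a * S y (N - a).
Proof.
elim: N => [|N IH]; first by rewrite /S !big_ord0.
rewrite S_rec IH Fsum !big_ord_recr /= subnn subSnn.
have -> : S y 1 = F y 0 by rewrite S_rec /S big_ord0 add0r.
have -> : \sum_(i < N) F x i * S y (N.+1 - i) =
   \sum_(i < N) F x i * S y (N - i) + \sum_(i < N) F x i * F y (N - i).
  rewrite -big_split; apply: eq_bigr => i _ /=.
  by rewrite subSn ?S_rec ?mulrDr // ltnW.
ring.
Qed.

Lemma S_tail y m B : (forall b, (m <= b)%N -> bl B (F y b)) ->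
  forall d, bl B (S y (m + d) - S y m).
Proof.
move=> h; elim=> [|d IH]; first by rewrite addn0 subrr; left.
rewrite addnS S_rec.
have -> : S y (m + d) + F y (m + d) - S y m = (S y (m + d) - S y m) + F y (m + d) by ring.
by apply: ballD => //; apply: h; rewrite leq_addr.
Qed.

Lemma D_small x y (M N : nat) : bl 1 x -> bl 1 y -> (2 * M <= N)%N ->
  bl M%:Z (S x N * S y N - S (x + y) N).
Proof.
move=> hx hy hN.
rewrite S_split /S mulr_suml -sumrB.
apply: ball_sum => a _; rewrite -mulrBr -!/(S _ _).
set La := (a%:Z - (wf a)%:Z).
have ha := ballF a hx.
have hb : bl (M%:Z - La) (S y N - S y (N - a)).
  have hbnd : forall b, (N - a <= b)%N -> bl (M%:Z - La) (F y b).
    move=> b hb; apply: ball_le (ballF b hy).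
    have := wf_bound a; have := wf_bound b; have := ltn_ord a; rewrite /La; lia.
  by have := S_tail hbnd a; rewrite subnK // ltnW.
have := ballM ha hb.
by have -> : La + (M%:Z - La) = M%:Z by ring.
Qed.

Lemma Exp_mul x y ex ey exy : bl 1 x -> bl 1 y ->
  Exp_is v x ex -> Exp_is v y ey -> Exp_is v (x + y) exy -> exy = ex * ey.
Proof.
move=> hx hy hex hey hexy.
have {}hex : is_lim v (S x) ex := hex; have {}hey : is_lim v (S y) ey := hey.
have {}hexy : is_lim v (S (x + y)) exy := hexy.
have hprod : is_lim v (fun N => S x N * S y N) (ex * ey).
  move=> M; have [m1 h1] := hex M; have [m2 h2] := hey M.
  exists (maxn m1 m2) => n hn.
  have -> : S x n * S y n - ex * ey = (S x n - ex) * S y n + ex * (S y n - ey) by ring.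
  apply: ballD.
    by have := ballM (h1 n (leq_trans (leq_maxl _ _) hn)) (ballS0 n hy); rewrite addr0.
  by have := ballM (Exp_ball0 hx hex) (h2 n (leq_trans (leq_maxr _ _) hn)); rewrite add0r.
apply: (lim_unique hexy); apply: (lim_ext hprod) => M.
exists (2 * `|M|)%N => n hn.
apply: ball_le (D_small hx hy hn); lia.
Qed.

Hypothesis complete : forall u, cauchy v u -> exists l, is_lim v u l.

Lemma v2 : (2%:R : K) != 0 /\ v 2%:R = 0.
Proof.
have [h0 h1] := vnat (isT : (0 < 2)%N); split => //; rewrite h1 logn_coprime //.
rewrite prime_coprime //; apply/negP => /dvdn_leq h; have {}h := h isT.
have := prime_gt1 pr; move: podd h; case: p => [|[|[|]]] //.
Qed.

Fixpoint newt (c : K) n := if n is n'.+1 then (newt c n' + c / newt c n') / 2%:R else 1.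

Lemma ball_inv0 x : x != 0 -> v x = 0 -> bl 0 x^-1.
Proof. by move=> x0 vx; right; rewrite vV // vx. Qed.

Lemma newt_inv c : bl 1 (c - 1) -> forall n,
  [/\ bl 1 (newt c n - 1), bl (n.+1)%:Z (newt c n ^+ 2 - c) &
      bl (n.+1)%:Z (newt c n.+1 - newt c n)].
Proof.
move=> hc; have [t0 vt] := v2.
have key : forall y, bl 1 (y - 1) -> y != 0 /\ v y = 0.
  by move=> y hy; have := ball_strict (oner_neq0 K) (y := y); rewrite v1 add0r => /(_ hy).
have step : forall n, bl 1 (newt c n - 1) -> bl (n.+1)%:Z (newt c n ^+ 2 - c) ->
    bl (n.+1)%:Z (newt c n.+1 - newt c n).
  move=> n h1 h2; have [y0 vy] := key _ h1.
  have -> : newt c n.+1 - newt c n = - (newt c n ^+ 2 - c) * ((2%:R)^-1 * (newt c n)^-1).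
    by rewrite /=; field; rewrite t0 y0.
  have := ballM (ballN h2) (ballM (ball_inv0 t0 vt) (ball_inv0 y0 vy)).
  by rewrite !addr0.
elim=> [|n [h1 h2 h3]].
  split; first by rewrite subrr; left.
    by rewrite /= expr1n -opprB; apply: ballN.
  by apply: step => //=; [rewrite subrr; left | rewrite expr1n -opprB; apply: ballN].
have [y0 vy] := key _ h1.
have h1' : bl 1 (newt c n.+1 - 1).
  have -> : newt c n.+1 - 1 = (newt c n - 1) + (newt c n.+1 - newt c n) by ring.
  by apply: ballD => //; apply: ball_le h3; lia.
have h2' : bl (n.+2)%:Z (newt c n.+1 ^+ 2 - c).
  have -> : newt c n.+1 ^+ 2 - c = (newt c n ^+ 2 - c) ^+ 2 *
      (((2%:R)^-1 * (newt c n)^-1) ^+ 2).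
    by rewrite /=; field; rewrite t0 y0.
  have := ballM (ball_exp' 2 h2) (ball_exp' 2 (ballM (ball_inv0 t0 vt) (ball_inv0 y0 vy))).
  by apply: ball_le; lia.
by split => //; apply: step.
Qed.

Lemma newt_cauchy c : bl 1 (c - 1) -> forall m d,
  bl (m.+1)%:Z (newt c (m + d) - newt c m).
Proof.
move=> hc m; elim=> [|d IH]; first by rewrite addn0 subrr; left.
have -> : newt c (m + d.+1) - newt c m =
  (newt c (m + d) - newt c m) + (newt c (m + d).+1 - newt c (m + d)) by rewrite addnS; ring.
apply: ballD => //; have [_ _ h] := newt_inv hc (m + d); apply: ball_le h; lia.
Qed.

Lemma hensel c : bl 1 (c - 1) -> exists y, y ^+ 2 = c.
Proof.
move=> hc.
have hC : cauchy v (newt c).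
  move=> N; exists `|N|%N => n k hn hk.
  have -> : newt c n - newt c k =
    (newt c (`|N| + (n - `|N|)) - newt c `|N|) - (newt c (`|N| + (k - `|N|)) - newt c `|N|).
    by rewrite !subnKC //; ring.
  by apply: ball_le (ballB (newt_cauchy hc _ _) (newt_cauchy hc _ _)); lia.
have [y hy] := complete hC.
exists y; apply/eqP; rewrite -subr_eq0; apply/eqP; apply: ball_all => N.
have hy0 : bl 0 y.
  apply: (lim_ball hy); exists 0%N => n _; have [h1 _ _] := newt_inv hc n.
  have -> : newt c n = (newt c n - 1) + 1 by ring.
  by apply: ballD; [apply: ball_le h1 | right; rewrite v1].
have [m hm] := hy N.
set n := maxn m `|N|.
have [h1 h2 _] := newt_inv hc n.
have -> : y ^+ 2 - c = - (newt c n - y) * (y + newt c n) + (newt c n ^+ 2 - c) by ring.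
apply: ballD.
  have hyn : bl 0 (y + newt c n).
    apply: ballD => //; have -> : newt c n = (newt c n - 1) + 1 by ring.
    by apply: ballD; [apply: ball_le h1 | right; rewrite v1].
  have := ballM (ballN (hm n (leq_maxl _ _))) hyn; rewrite addr0; exact.
apply: ball_le h2; have := leq_maxr m `|N|; rewrite -/n; lia.
Qed.

Lemma Zp_def lam : (exists mu, mu ^+ 2 = 1 + p%:R * lam ^+ 2) <-> bl 0 lam.
Proof.
split; last first.
  move=> h; apply: hensel; rewrite (_ : 1 + p%:R * lam ^+ 2 - 1 = p%:R * lam ^+ 2); last by ring.
  have := ballM (ball_v (p%:R : K)) (ball_exp' 2 h); rewrite vp; apply: ball_le; lia.
move=> [mu hmu].
case: (eqVneq lam 0) => [->|l0]; first by left.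
case: (lerP 0 (v lam)) => hl; first by right.
have t0 : (p%:R : K) * lam ^+ 2 != 0 by rewrite mulf_neq0 // expf_neq0.
have vt : v (p%:R * lam ^+ 2) = 1 + v lam * 2%:Z by rewrite vM ?expf_neq0 // vX // vp; lia.
have := ball_strict t0 (y := 1 + p%:R * lam ^+ 2).
rewrite addrK => /(_ (or_intror _)) [|c0 vc].
  by rewrite v1 vt; lia.
rewrite -hmu in c0 vc.
have mu0 : mu != 0 by apply: contraNneq c0 => ->; rewrite expr0n.
rewrite vX // vt in vc; lia.
Qed.

Lemma psum_rec (c : nat -> K) h M :
  \sum_(n < M.+1) c n * h ^+ n = \sum_(n < M) c n * h ^+ n + c M * h ^+ M.
Proof. by rewrite big_ord_recr. Qed.

Lemma lead_term (c : nat -> K) (r lr : K) (k : nat) :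
  r != 0 -> is_lim v (fun M => \sum_(n < M) c n * r ^+ n) lr ->
  c k != 0 -> (forall n, (n < k)%N -> c n = 0) ->
  exists D : int, forall h L, h != 0 -> D <= v h ->
    is_lim v (fun M => \sum_(n < M) c n * h ^+ n) L ->
    L != 0 /\ v L = v (c k) + k%:Z * v h.
Proof.
move=> r0 hr ck0 hck.
have [m hm] := lim_step 0 hr.
have ht : forall n, (m <= n)%N -> bl 0 (c n * r ^+ n).
  by move=> n hn; have := hm n hn; rewrite psum_rec addrC addKr.
have hC' : forall m', exists C : int, C <= 0 /\ forall n, (n < m')%N -> bl C (c n * r ^+ n).
  elim=> [|m' [C [C0 hCn]]]; first by exists 0; split.
  case: (lerP C (v (c m' * r ^+ m'))) => hle.
    exists C; split => // n; rewrite ltnS leq_eqVlt => /orP [/eqP ->|hn].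
      by right.
    exact: hCn.
  exists (v (c m' * r ^+ m')); split; first lia.
  move=> n; rewrite ltnS leq_eqVlt => /orP [/eqP ->|hn]; first by right.
  by apply: ball_le (hCn n hn); lia.
have [C [C0 hC]] : exists C : int, C <= 0 /\ forall n, bl C (c n * r ^+ n).
  have [C [C0 hCn]] := hC' m; exists C; split => // n.
  case: (ltnP n m) => hn; first exact: hCn.
  by apply: ball_le (ht n hn); lia.
set E := v (c k) + k%:Z * v r + 1 - C.
exists (v r + `|E|%N%:Z) => h L h0 hD hL.
set d := v h - v r.
have d0 : 0 <= d by rewrite /d; lia.
have dE : E <= d by rewrite /d; lia.
have hq : bl d (h / r) by right; rewrite vM ?invr_eq0 // vV //.
set T := v (c k) + k%:Z * v h.
have hterm : forall n, (k < n)%N -> bl (T + 1) (c n * h ^+ n).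
  move=> n hn.
  have -> : c n * h ^+ n = (c n * r ^+ n) * (h / r) ^+ n by rewrite exprMn exprVn; field; rewrite expf_neq0.
  apply: ball_le (ballM (hC n) (ball_exp' n hq)).
  have hdn : d * (k.+1)%:Z <= d * n%:Z by nia.
  have hT : T = v (c k) + k%:Z * v r + k%:Z * d by rewrite /T /d; ring.
  rewrite hT; move: dE; rewrite /E; nia.
have hpart : forall j, bl (T + 1) (\sum_(n < k.+1 + j) c n * h ^+ n - c k * h ^+ k).
  elim=> [|j IH].
    rewrite addn0 psum_rec big1 ?add0r ?subrr; first by left.
    by move=> i _; rewrite hck // mul0r.
  rewrite addnS psum_rec.
  have -> : \sum_(n < k.+1 + j) c n * h ^+ n + c (k.+1 + j)%N * h ^+ (k.+1 + j) - c k * h ^+ k =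
    (\sum_(n < k.+1 + j) c n * h ^+ n - c k * h ^+ k) + c (k.+1 + j)%N * h ^+ (k.+1 + j) by ring.
  by apply: ballD => //; apply: hterm; rewrite ltnS leq_addr.
have hL2 : bl (T + 1) (L - c k * h ^+ k).
  apply: (lim_ball (limC (c k * h ^+ k) hL)); exists k.+1 => n hn.
  by have := hpart (n - k.+1)%N; rewrite subnKC.
have ch0 : c k * h ^+ k != 0 by rewrite mulf_neq0 // expf_neq0.
have vch : v (c k * h ^+ k) = T by rewrite vM ?expf_neq0 // vX // /T; lia.
by have := ball_strict ch0 (y := L); rewrite vch => /(_ hL2) [-> ->].
Qed.

Variables (beta : K) (W : weier K) (xi chi : K -> (K * K * K)%type).
Hypothesis beta0 : beta != 0.
Hypothesis hbeta : bl 1 beta.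
Hypothesis xiE : forall x : K, x != 0 -> Epoint W (xi x).
Hypothesis xiM : forall x y : K, x != 0 -> y != 0 -> xi (x * y) = eadd W (xi x) (xi y).
Hypothesis xiK : forall x : K, x != 0 -> (xi x = Ozero K <-> exists k : int, x = beta ^ k).
Hypothesis xiA : analytic_map v xi.
Hypothesis chiE : forall a : K, isZp v a ->
  exists e : K, Exp_is v (p%:R * a) e /\ chi a = xi e.

Lemma vexpz x (k : int) : x != 0 -> v (x ^ k) = k * v x.
Proof.
move=> x0; case: k => n.
  by rewrite /exprz /= vX //; lia.
rewrite NegzE /exprz /= vV ?expf_neq0 // vX //; lia.
Qed.

Lemma vbeta : 1 <= v beta.
Proof. by case: hbeta => // /eqP; rewrite (negPf beta0). Qed.

Lemma xi_kernel x : x != 0 -> v x = 0 -> xi x = Ozero K -> x = 1.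
Proof.
move=> x0 vx /(xiK x0) [k hk].
have : v x = k * v beta by rewrite hk vexpz.
have := vbeta; rewrite vx => h1 h2.
have k0 : k = 0 by nia.
by rewrite hk k0 expr0z.
Qed.

Lemma xi1 : xi 1 = Ozero K.
Proof. by apply/(xiK (oner_neq0 K)); exists 0; rewrite expr0z. Qed.

Lemma Exp_1 : Exp_is v 0 1.
Proof.
apply: (lim_ext (lim_cst 1)) => N.
by exists 1%N => n hn; rewrite -/(S 0 n) S0 // subrr; left.
Qed.

Lemma pa_ball a : isZp v a -> bl (1 + v a) (p%:R * a) /\ bl 1 (p%:R * a).
Proof.
move=> ha; have h := ballM (ball_v (p%:R : K)) (ball_v a); rewrite vp in h.
by split => //; have := ballM (ball_v (p%:R : K)) ha; rewrite vp addr0.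
Qed.

Lemma Exp_pa a e : isZp v a -> Exp_is v (p%:R * a) e ->
  [/\ e != 0, v e = 0, bl 1 (e - 1) & (a != 0 -> e - 1 != 0 /\ v (e - 1) = 1 + v a)].
Proof.
move=> ha he.
have [hpa1 hpa] := pa_ball ha.
case: (eqVneq a 0) => [a0|a0].
  move: he; rewrite a0 mulr0 => he; rewrite (Exp0 he) subrr v1.
  by split; [exact: oner_neq0 | done | left | rewrite eqxx].
have pa0 : p%:R * a != 0 by rewrite mulf_neq0.
have hd := Exp_diff hpa (ball0 1) pa0 he Exp_1.
rewrite !subr0 in hd.
have hs := ball_strict pa0 (y := e - 1); rewrite vM // vp in hs.
have [e10 ve1] : e - 1 != 0 /\ v (e - 1) = 1 + v a.
  apply: hs; move: hd; rewrite vM // vp; congr bl; ring.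
have hb1 : bl 1 (e - 1) by right; rewrite ve1; have := ha; case=> [/eqP|]; [rewrite (negPf a0) | lia].
have := ball_strict (oner_neq0 K) (y := e); rewrite v1 add0r => /(_ hb1) [e0 ve].
by split => //; rewrite ve1 vM // vp.
Qed.

Lemma chi_add a b : isZp v a -> isZp v b -> chi (a + b) = eadd W (chi a) (chi b).
Proof.
move=> ha hb.
have [ea [hea ->]] := chiE ha; have [eb [heb ->]] := chiE hb.
have hab : isZp v (a + b) by apply: ballD.
have [eab [heab ->]] := chiE hab.
have [ea0 _ _ _] := Exp_pa ha hea; have [eb0 _ _ _] := Exp_pa hb heb.
rewrite mulrDr in heab.
by rewrite (Exp_mul (pa_ball ha).2 (pa_ball hb).2 hea heb heab) xiM.
Qed.

Lemma chi_inj a b : isZp v a -> isZp v b -> chi a = chi b -> a = b.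
Proof.
move=> ha hb.
have [ea [hea ->]] := chiE ha; have [eb [heb ->]] := chiE hb.
have [ea0 vea _ _] := Exp_pa ha hea; have [eb0 veb _ _] := Exp_pa hb heb.
move=> hx.
have f0 : eb^-1 != 0 by rewrite invr_eq0.
have h1 : eadd W (xi eb) (xi eb^-1) = Ozero K by rewrite -xiM // mulfV // xi1.
have h2 : xi (ea * eb^-1) = Ozero K by rewrite xiM // hx.
have eaf0 : ea * eb^-1 != 0 by rewrite mulf_neq0.
have := xi_kernel eaf0 _ h2; rewrite vM // vV // vea veb => /(_ erefl) /eqP.
rewrite -[_ == 1]subr_eq0 -[1](mulfV eb0) -mulrBl mulf_eq0 invr_eq0 (negPf eb0) orbF subr_eq0.
move=> /eqP eab; apply/eqP; apply/negPn/negP => hab.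
have pab : p%:R * a != p%:R * b by apply: contra hab => /eqP/mulfI -> //.
have := Exp_diff (pa_ball ha).2 (pa_ball hb).2 pab hea heb.
rewrite eab subrr sub0r; case=> [/eqP|].
  by rewrite oppr_eq0 subr_eq0 (negPf pab).
by rewrite vN; lia.
Qed.

Lemma chi0 : chi 0 = Ozero K.
Proof.
have [e [he ->]] := chiE (ball0 0); rewrite mulr0 in he.
by rewrite (Exp0 he) xi1.
Qed.

Definition wj (jb : bool) (P : K * K * K) := (if jb then P.1.1 else P.2) / P.1.2.

Lemma val_small : exists (S0 : nat) (jb : bool), forall a b,
  bl S0%:Z a -> bl S0%:Z b ->
  ((exists lam, bl 0 lam /\ wj jb (chi b) = lam * wj jb (chi a)) <-> val_le v a b).
Proof.
have [N0 [i [c hc]]] := xiA (oner_neq0 K).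
have i1 : i = Ordinal (isT : (1 < 3)%N).
  apply: val_inj => /=.
  have [h _] := hc 1 (oner_neq0 K) (or_introl (subrr 1)).
  move: h; rewrite xi1 /Ozero /Defs.coord.
  case: (val i =P 0%N) => [_|h0] /=; first by rewrite eqxx.
  by case: (val i =P 1%N) => [->//|h1] /=; rewrite eqxx.
pose jo (jb : bool) : 'I_3 := if jb then Ordinal (isT : (0 < 3)%N) else Ordinal (isT : (2 < 3)%N).
have joi : forall jb, jo jb != i by rewrite i1; case.
have cw : forall jb P, Defs.coord P (jo jb) / Defs.coord P i = wj jb P.
  by rewrite i1; case=> [] [[x y] z].
set E := (`|N0|.+1)%N.
set r : K := p%:R ^+ E.
have r0 : r != 0 by rewrite expf_neq0.
have vr : v r = E%:Z by rewrite vX // vp; lia.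
set x1 := 1 + r.
have hx1 : x1 - 1 = r by rewrite /x1; ring.
have [x10 vx1] : x1 != 0 /\ v x1 = 0.
  by have := ball_strict (oner_neq0 K) (y := x1); rewrite v1 add0r hx1 => /(_ (or_intror _)) []; [rewrite vr; lia | move=> -> ->].
have bx1 : bl N0 (x1 - 1) by right; rewrite hx1 vr; lia.
have x1n : x1 != 1 by rewrite -subr_eq0 hx1.
have [_ hlim1] := hc x1 x10 bx1.
have [jb hjb] : exists jb, exists n, c (jo jb) n != 0.
  apply: NNPP => hn.
  have hz : forall jb, Defs.coord (xi x1) (jo jb) = 0.
    move=> jb.
    have hl := hlim1 (jo jb) (joi jb).
    have h0 : Defs.coord (xi x1) (jo jb) / Defs.coord (xi x1) i = 0.
      apply: (lim_unique hl); apply: (lim_ext (lim_cst 0)) => N; exists 0%N => n _.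
      rewrite big1 ?subrr; first by left.
      move=> m _; have : c (jo jb) m = 0.
        by apply/eqP; apply/negPn/negP => hm; apply: hn; exists jb; exists m.
      by move=> ->; rewrite mul0r.
    have [hi0 _] := hc x1 x10 bx1.
    by move: h0 => /eqP; rewrite mulf_eq0 invr_eq0 (negPf hi0) orbF => /eqP.
  have hE := xiE x10.
  have hO : xi x1 = Ozero K.
    move: (hz true) (hz false) hE; rewrite /Epoint /Ozero.
    case: (xi x1) => [[a b] z] /= -> ->; rewrite /normalized eqxx /= => /andP [].
    by rewrite (eq_sym 0 1) oner_eq0 /= andbF orbF => /eqP -> _.
  by move: x1n; rewrite (xi_kernel x10 vx1 hO) eqxx.
pose P := fun n => c (jo jb) n != 0.
have [k ck kmin] := ex_minnP hjb.
set c' := c (jo jb) in ck kmin.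
have ck0 : forall n, (n < k)%N -> c' n = 0.
  by move=> n hn; apply/eqP; apply/negPn/negP => h; have := kmin n h; rewrite leqNgt hn.
have c00 : c' 0%N = 0.
  have [_ hl] := hc 1 (oner_neq0 K) (or_introl (subrr 1)).
  have := hl (jo jb) (joi jb); rewrite cw xi1 subrr => hl0.
  have e0 : wj jb (Ozero K) = 0 by case: jb {P c' ck kmin ck0 hjb hl0} => /=; rewrite /wj /= mul0r.
  rewrite e0 in hl0; apply: (lim_unique _ hl0); apply: (lim_ext (lim_cst (c' 0%N))) => N.
  exists 1%N => n; case: n => // n _; rewrite big_ord_recl /= expr0 mulr1 big1 ?addr0 ?subrr; first by left.
  by move=> m _; rewrite expr0n /= mulr0.
have k0 : (0 < k)%N by case: k ck {kmin ck0} => //; rewrite c00 eqxx.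
have r0' : x1 - 1 != 0 by rewrite hx1.
have [D hD] := lead_term r0' (hlim1 (jo jb) (joi jb)) ck ck0.
have hw0 : wj jb (chi 0) = 0.
  by rewrite chi0; case: jb {P c' ck kmin ck0 hjb hD c00 k0} => /=; rewrite /wj /= mul0r.
set S0 := (`|N0| + `|D|)%N.
have hw1 : forall a, bl S0%:Z a -> a != 0 ->
    wj jb (chi a) != 0 /\ v (wj jb (chi a)) = v (c' k) + k%:Z * (1 + v a).
  move=> a ha a0.
  have hz : isZp v a by apply: ball_le ha; clear; lia.
  have [e [he ->]] := chiE hz.
  have [e0 _ _ /(_ a0) [e10 ve1]] := Exp_pa hz he.
  have va : S0%:Z <= v a by case: ha => // /eqP; rewrite (negPf a0).
  have be : bl N0 (e - 1) by right; rewrite ve1; move: va; rewrite /S0; clear; lia.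
  have [_ hl] := hc e e0 be.
  have := hl (jo jb) (joi jb); rewrite cw => hle.
  have hDe : D <= v (e - 1) by rewrite ve1; move: va; rewrite /S0; clear; lia.
  by have := hD (e - 1) _ e10 hDe hle; rewrite ve1.
exists S0, jb => a b ha hb.
case: (eqVneq b 0) => [->|b0].
  rewrite hw0; split => _; first by left.
  by exists 0; split; [left | rewrite mul0r].
case: (eqVneq a 0) => [->|a0].
  rewrite hw0; split.
    move=> [lam [_ h]]; rewrite mulr0 in h; have [hb0 _] := hw1 b hb b0.
    by rewrite h eqxx in hb0.
  by case=> [/eqP|[]]; [rewrite (negPf b0) | rewrite eqxx].
have [A0 vA] := hw1 a ha a0; have [B0 vB] := hw1 b hb b0.
rewrite /val_le; split.
  move=> [lam [hl he]]; right; split => //.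
  have l0 : lam != 0 by apply: contraNneq B0 => l0; rewrite he l0 mul0r.
  have vl : 0 <= v lam by case: hl => // /eqP; rewrite (negPf l0).
  have : v (wj jb (chi b)) = v lam + v (wj jb (chi a)) by rewrite he vM.
  rewrite vA vB => h.
  have h2 : 0 <= k%:Z * (v b - v a).
    have -> : k%:Z * (v b - v a) = k%:Z * (1 + v b) - k%:Z * (1 + v a) by ring.
    by move: h vl; clear; lia.
  by rewrite pmulr_rge0 ?ltz_nat // in h2; move: h2; clear; lia.
case=> [/eqP|[_ hab]]; first by rewrite (negPf b0).
exists (wj jb (chi b) / wj jb (chi a)); split; last by rewrite divfK.
right; rewrite vM ?invr_eq0 // vV // vA vB.
have -> : v (c' k) + k%:Z * (1 + v b) + - (v (c' k) + k%:Z * (1 + v a)) = k%:Z * (v b - v a) by ring.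
apply: mulr_ge0; [by [] | by move: hab; clear; lia].
Qed.

Definition tV i : GRing.term K := GRing.Var K i.
Definition tC (x : K) : GRing.term K := GRing.Const x.
Definition tA (s t : GRing.term K) := GRing.Add s t.
Definition tB (s t : GRing.term K) := GRing.Add s (GRing.Opp t).
Definition tM (s t : GRing.term K) := GRing.Mul s t.
Definition tD (s t : GRing.term K) := GRing.Mul s (GRing.Inv t).
Definition fE (s t : GRing.term K) := GRing.Equal s t.

Definition fpt (a b c : GRing.term K) (o : nat) : GRing.formula K :=
  GRing.And (fE (tV o) a) (GRing.And (fE (tV o.+1) b) (fE (tV o.+2) c)).

Definition fadd : GRing.formula K :=
  let a1 := tC (wa1 W) in let a2 := tC (wa2 W) in let a3 := tC (wa3 W) in
  let a4 := tC (wa4 W) in let a6 := tC (wa6 W) in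
  let x1 := tV 0 in let y1 := tV 1 in let z1 := tV 2 in
  let x2 := tV 3 in let y2 := tV 4 in let z2 := tV 5 in
  let cnd := GRing.And (fE x1 x2) (fE (tA (tA (tA y1 y2) (tM a1 x2)) a3) (tC 0)) in
  let lam1 := tD (tB y2 y1) (tB x2 x1) in
  let nu1 := tD (tB (tM y1 x2) (tM y2 x1)) (tB x2 x1) in
  let den := tA (tA (tM (tC 2) y1) (tM a1 x1)) a3 in
  let lam2 := tD (tB (tA (tA (tM (tC 3) (GRing.Exp x1 2)) (tM (tM (tC 2) a2) x1)) a4) (tM a1 y1)) den in
  let nu2 := tD (tB (tA (tA (GRing.Opp (GRing.Exp x1 3)) (tM a4 x1)) (tM (tC 2) a6)) (tM a3 y1)) den in
  let X3 lam := tB (tB (tB (tA (GRing.Exp lam 2) (tM a1 lam)) a2) x1) x2 in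
  let Y3 lam nu := tB (tB (tM (GRing.Opp (tA lam a1)) (X3 lam)) nu) a3 in
  GRing.Or (GRing.And (fE z1 (tC 0)) (fpt x2 y2 z2 6))
   (GRing.And (GRing.Not (fE z1 (tC 0)))
    (GRing.Or (GRing.And (fE z2 (tC 0)) (fpt x1 y1 z1 6))
     (GRing.And (GRing.Not (fE z2 (tC 0)))
      (GRing.Or (GRing.And cnd (fpt (tC 0) (tC 1) (tC 0) 6))
       (GRing.And (GRing.Not cnd)
        (GRing.Or (GRing.And (fE x1 x2) (fpt (X3 lam2) (Y3 lam2 nu2) (tC 1) 6))
          (GRing.And (GRing.Not (fE x1 x2)) (fpt (X3 lam1) (Y3 lam1 nu1) (tC 1) 6)))))))).

Lemma holds_fadd x1 y1 z1 x2 y2 z2 x3 y3 z3 :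
  GRing.holds [:: x1; y1; z1; x2; y2; z2; x3; y3; z3] fadd <->
  let: (a, b, c) := eadd W (x1, y1, z1) (x2, y2, z2) in [/\ x3 = a, y3 = b & z3 = c].
Proof.
rewrite /fadd /=; case: W => a1 a2 a3 a4 a6 /=.
case: (z1 =P 0) => hz1; case: (z2 =P 0) => hz2; case: (x1 =P x2) => hx;
  case: (y1 + y2 + a1 * x2 + a3 =P 0) => hc /=;
  split; (try by intuition); try (by case); (try by move=> [-> -> ->]; intuition).
Qed.

Lemma pt_iff (x3 y3 z3 : K) (t : K * K * K) :
  (x3, y3, z3) = t <-> let: (a, b, c) := t in [/\ x3 = a, y3 = b & z3 = c].
Proof. by case: t => [[a b] c]; split => [[-> -> ->]|[-> -> ->]]. Qed.

Definition fnorm o : GRing.formula K :=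
  GRing.Or (fE (tV o.+2) (tC 1))
   (GRing.Or (GRing.And (fE (tV o.+2) (tC 0)) (fE (tV o.+1) (tC 1)))
     (GRing.And (fE (tV o.+2) (tC 0)) (GRing.And (fE (tV o.+1) (tC 0)) (fE (tV o) (tC 1))))).

Lemma holds_fnorm (s : seq K) o :
  GRing.holds s (fnorm o) <-> normalized (s`_o, s`_o.+1, s`_o.+2).
Proof.
rewrite /normalized /=; split.
  by case=> [h|[[h1 h2]|[h1 [h2 h3]]]]; rewrite ?h ?h1 ?h2 ?h3 !eqxx ?orbT.
case/or3P => [/eqP h|/andP [/eqP h1 /eqP h2]|/and3P [/eqP h1 /eqP h2 /eqP h3]].
- by left.
- by right; left.
- by right; right.
Qed.

Definition Yadd (ts : seq (K * K * K)) : Prop :=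
  match ts with [:: P; Q; R] => R = eadd W P Q | _ => False end.

Lemma P2def_add : P2_definable 3 Yadd.
Proof.
exists (GRing.And (fnorm 0) (GRing.And (fnorm 3) (GRing.And (fnorm 6) fadd))).
case=> [|x1 [|y1 [|z1 [|x2 [|y2 [|z2 [|x3 [|y3 [|z3 [|? ?]]]]]]]]]] hs; try by rewrite /= in hs.
split.
  case=> [[|[[a1 b1] c1] [|[[a2 b2] c2] [|[[a3 b3] c3] [|? ?]]]]] [] hts; try by rewrite /= in hts.
  move=> hall hf hY; rewrite /= in hf.
  case: hf => -> -> -> -> -> -> -> -> ->.
  rewrite /= !andbT in hall; case/and3P: hall => n1 n2 n3.
  split; first by apply/holds_fnorm.
  split; first by apply/holds_fnorm.
  split; first by apply/holds_fnorm.
  by apply/holds_fadd; rewrite -pt_iff.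
move=> [/holds_fnorm n1 [/holds_fnorm n2 [/holds_fnorm n3 /holds_fadd ha]]].
rewrite /= in n1 n2 n3.
exists [:: (x1, y1, z1); (x2, y2, z2); (x3, y3, z3)]; split => //=.
  by rewrite n1 n2 n3.
by apply/pt_iff.
Qed.

Definition Yval (jb : bool) (ts : seq (K * K * K)) : Prop :=
  match ts with
  | [:: P; Q] => exists lam : K, and (exists mu : K, mu ^+ 2 = 1 + p%:R * lam ^+ 2)
                   (wj jb Q = lam * wj jb P)
  | _ => False
  end.

Lemma P2def_val jb : P2_definable 2 (Yval jb).
Proof.
exists (GRing.And (fnorm 0) (GRing.And (fnorm 3) (GRing.Exists 6
  (GRing.And (GRing.Exists 7 (fE (GRing.Exp (tV 7) 2) (tA (tC 1) (tM (tC p%:R) (GRing.Exp (tV 6) 2)))))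
     (fE (tD (tV (if jb then 3 else 5)) (tV 4)) (tM (tV 6) (tD (tV (if jb then 0 else 2)) (tV 1)))))))).
case=> [|x1 [|y1 [|z1 [|x2 [|y2 [|z2 [|? ?]]]]]]] hs; try by rewrite /= in hs.
split.
  case=> [[|[[a1 b1] c1] [|[[a2 b2] c2] [|? ?]]]] [] hts; try by rewrite /= in hts.
  move=> hall hf hY; rewrite /= in hf.
  case: hf => -> -> -> -> -> ->.
  rewrite /= !andbT in hall; case/andP: hall => n1 n2.
  split; first by apply/holds_fnorm.
  split; first by apply/holds_fnorm.
  case: hY => lam [[mu hmu] hw]; exists lam; split; first by exists mu.
  by move: hw; rewrite /wj; case: jb.
move=> [/holds_fnorm n1 [/holds_fnorm n2 [lam [[mu hmu] hw]]]].
rewrite /= in n1 n2 hmu hw.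
exists [:: (x1, y1, z1); (x2, y2, z2)]; split => //=.
  by rewrite n1 n2.
exists lam; split; first by exists mu.
by move: hw; rewrite /wj; case: jb.
Qed.

Lemma intr_ball z : bl 0 (z%:~R : K).
Proof.
case: z => n; first exact: ball0_nat.
by change (bl 0 (- (n.+1)%:R)); apply: ballN; apply: ball0_nat.
Qed.

Lemma intr_v z : z != 0 -> (z%:~R : K) != 0 /\ v z%:~R = (logn p `|z|)%:Z.
Proof.
case: z => n hz.
  have n0 : (0 < n)%N by case: n hz.
  exact: (vnat n0).
change ((- (n.+1)%:R : K) != 0 /\ v (- (n.+1)%:R) = (logn p n.+1)%:Z).
have [h1 h2] := vnat (ltn0Sn n).
by rewrite oppr_eq0 vN.
Qed.

Lemma intr_inj a b : (a%:~R : K) = b%:~R -> a = b.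
Proof.
move=> h; case: (eqVneq a b) => // hab.
have hab' : a - b != 0 by rewrite subr_eq0.
have [hK _] := intr_v hab'.
by move: hK; rewrite intrB h subrr eqxx.
Qed.

Lemma int_vle a b : int_val_le p a b <-> val_le v (a%:~R : K) b%:~R.
Proof.
rewrite /int_val_le /val_le.
case: (eqVneq b 0) => [->|b0]; first by split => _; left.
have [bK vb] := intr_v b0.
split.
  case=> [/eqP|[a0 h]]; first by rewrite (negPf b0).
  have [aK va] := intr_v a0.
  by right; split => //; rewrite va vb lez_nat.
case=> [/eqP|[aK h]]; first by rewrite (negPf bK).
have a0 : a != 0 by apply: contraNneq aK => ->.
have [_ va] := intr_v a0.
by right; split => //; rewrite va vb lez_nat in h.
Qed.

Lemma val_scale (M : nat) x y : (M%:R : K) != 0 ->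
  (val_le v (M%:R * x) (M%:R * y) <-> val_le v x y).
Proof.
move=> M0; rewrite /val_le.
case: (eqVneq y 0) => [->|y0]; first by rewrite mulr0; split => _; left.
have My : M%:R * y != 0 by rewrite mulf_neq0.
split.
  case=> [/eqP|[Mx h]]; first by rewrite (negPf My).
  have x0 : x != 0 by apply: contraNneq Mx => ->; rewrite mulr0.
  by right; split => //; move: h; rewrite !vM //; lia.
case=> [/eqP|[x0 h]]; first by rewrite (negPf y0).
right; split; first by rewrite mulf_neq0.
by rewrite !vM //; lia.
Qed.

Lemma fo_def_ext (T : Type) (L : (seq T -> Prop) -> Prop) m (X X' : seq T -> Prop) :
  (forall s, size s = m -> (X s <-> X' s)) -> fo_definable L m X -> fo_definable L m X'.
Proof.
move=> hX [f [hf [e0 he]]]; exists f; split => //; exists e0 => s hs.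
by split => h; [apply/he => //; apply/hX | apply/hX => //; apply/he].
Qed.

Lemma main_sec :
  expands_add_val (induced_lang (fun a : Zp_type v => chi (sval a)))
      (fun a b c : Zp_type v => sval a + sval b = sval c)
      (fun a b => val_le v (sval a) (sval b))
  /\ expands_add_val (induced_lang (fun n : int => chi (n%:~R)))
      (fun a b c : int => a + b = c) (int_val_le p).
Proof.
have [S0 [jb hval]] := val_small.
set Nn := (p ^ S0)%N.
have Nn0 : (Nn%:R : K) != 0 by rewrite natrX expf_neq0.
have vNn : v (Nn%:R : K) = S0%:Z by rewrite natrX vX // vp; lia.
have small : forall x, isZp v x -> bl S0%:Z (Nn%:R * x).
  by move=> x hx; have := ballM (ball_v (Nn%:R : K)) hx; rewrite vNn addr0.
have vsemK : forall x y, isZp v x -> isZp v y ->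
    (Yval jb [:: chi (Nn%:R * x); chi (Nn%:R * y)] <-> val_le v x y).
  move=> x y hx hy.
  apply: (iff_trans _ (val_scale _ _ Nn0)).
  apply: (iff_trans _ (hval _ _ (small x hx) (small y hy))).
  rewrite /Yval; split => [[lam [/Zp_def h1 h2]]|[lam [/Zp_def h1 h2]]]; by exists lam.
have addsem : forall x y z, isZp v x -> isZp v y -> isZp v z ->
    (Yadd [:: chi x; chi y; chi z] <-> x + y = z).
  move=> x y z hx hy hz; rewrite /Yadd; split => [h|<-]; last by rewrite chi_add.
  by apply: chi_inj => //; [apply: ballD | rewrite chi_add].
split.
  apply: (@fo_expands K (Zp_type v) (exist _ 0 (ball0 0)) (fun a => chi (sval a))
     (fun a => sval a) (Yadd) (Yval jb) Nn).
  - exact: P2def_add.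
  - exact: P2def_val.
  - by move=> [a ha] [b hb] [c hc] /=; apply: addsem.
  - move=> [a ha] n.
    have hn : isZp v (n%:R * a) by have := ballM (ball0_nat n) ha; rewrite addr0.
    by exists (exist _ (n%:R * a) hn).
  - by move=> [a ha] [b hb] [c hc] [d hd] /= -> ->; apply: vsemK.
have H := @fo_expands K int 0 (fun n => chi n%:~R) (fun n => n%:~R) (Yadd) (Yval jb) Nn
  (int_val_le p) (P2def_add) (P2def_val jb).
case: H.
- by move=> a b c; apply: addsem; apply: intr_ball.
- by move=> a n; exists (a * n%:Z); rewrite intrM mulrC.
- move=> a b c d -> ->; apply: (iff_trans (vsemK _ _ (intr_ball a) (intr_ball b))).
  by apply: iff_sym; apply: int_vle.
move=> H1 H2; split => //.
apply: (fo_def_ext _ H1) => s.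
case: s => [|a [|b [|c [|? ?]]]] hs; try by rewrite /= in hs.
by split => [h|<-]; [apply: intr_inj; rewrite intrD | rewrite intrD].
Qed.

End Val.

Theorem proposition12p1 (K : fieldType) (v : K -> int) (p : nat)
    (beta : K) (W : weier K) (xi : K -> (K * K * K)%type) (chi : K -> (K * K * K)%type) :
  prime p -> odd p -> padic_field v p ->
  beta != 0 -> ball v 1 beta ->
  disc W != 0 ->
  (forall x : K, x != 0 -> Epoint W (xi x)) ->
  (forall x y : K, x != 0 -> y != 0 -> xi (x * y) = eadd W (xi x) (xi y)) ->
  (forall P, Epoint W P -> exists2 x : K, x != 0 & xi x = P) ->
  (forall x : K, x != 0 -> (xi x = Ozero K <-> exists k : int, x = beta ^ k)) ->
  analytic_map v xi ->
  (forall a : K, isZp v a -> exists e : K, Exp_is v (p%:R * a) e /\ chi a = xi e) ->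
  expands_add_val (induced_lang (fun a : Zp_type v => chi (sval a)))
      (fun a b c : Zp_type v => sval a + sval b = sval c)
      (fun a b => val_le v (sval a) (sval b))
  /\ expands_add_val (induced_lang (fun n : int => chi (n%:~R)))
      (fun a b c : int => a + b = c) (int_val_le p).
Proof.
move=> pr podd [vM vU [p0 vp] complete _] beta0 hbeta _ xiE xiM _ xiK xiA chiE.
exact: (main_sec vM vU p0 vp pr podd complete beta0 hbeta xiE xiM xiK xiA chiE).
Qed.
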